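(* Let $\mathbb{K}$ be an algebraically closed field, and let $f(x), g(x) \in \mathbb{K}[x]$ be monic polynomials, with $d = \deg f \geq 1$. Assume $f$ is squarefree, and let $\mathcal{Z}(f)$ and $\mathcal{Z}(g)$ denote the sets of roots of $f$ and $g$. Define \[ s(x) = \prod_{\zeta \in \mathcal{Z}(f) \setminus (\mathcal{Z}(f) \cap \mathcal{Z}(g))} (x - \zeta). \] Let $M_g$ be the $d \times d$ matrix, in the monomial basis $1, x, \ldots, x^{d-1}$ of $\mathbb{A} = \mathbb{K}[x]/(f)$, of the map $h \mapsto \pi(gh)$, where $\pi(p)$ is the remainder of $p$ modulo $f$. Suppose $\ker(M_g) \neq 0$. Let $K_g$ be a matrix whose columns form a basis of $\ker(M_g)$, and consider a column echelon form of $K_g$. Then the first column of this column echelon form is, up to multiplication by a nonzero scalar, the coefficient vector of $s(x)$ in the basis $1, x, \ldots, x^{d-1}$.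
   Context: A vector $(c_0, \ldots, c_{d-1})^T \in \mathbb{K}^d$ is identified with the polynomial $c_0 + c_1 x + \cdots + c_{d-1} x^{d-1}$. A column echelon form of $K_g$ is a matrix obtained from $K_g$ by elementary column operations, in which the columns are nonzero and the polynomials associated to the columns have strictly increasing degrees from the first column to the last. In particular, the first column has the smallest degree. *)

(* Defs.v *)
From mathcomp Require Import all_boot all_order all_algebra.
Set Implicit Arguments. Unset Strict Implicit. Unset Printing Implicit Defensive.
Import GRing.Theory.
Local Open Scope ring_scope.

Definition squarefree (K : fieldType) (f : {poly K}) : Prop :=
  forall p : {poly K}, p * p %| f -> (size p <= 1)%N.

Definition mult_mx (K : fieldType) (d : nat) (f g : {poly K}) : 'M[K]_d :=
  \matrix_(i < d, j < d) ((g * 'X^j) %% f)`_i.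

Definition colpoly (K : fieldType) (d k : nat) (E : 'M[K]_(d, k)) (j : 'I_k)
  : {poly K} := \sum_(i < d) E i j *: 'X^i.

(* E is a column echelon form of A: obtained by elementary column operations
   (i.e. E = A U with U invertible), columns nonzero, and the associated
   polynomials have strictly increasing degrees *)
Definition col_echelon_form_of (K : fieldType) (d k : nat)
  (A E : 'M[K]_(d, k)) : Prop :=
  (exists2 U : 'M[K]_k, U \in unitmx & E = A *m U) /\
  (forall j, colpoly E j != 0) /\
  (forall j1 j2 : 'I_k, (j1 < j2)%N -> (size (colpoly E j1) < size (colpoly E j2))%N).
Arguments mult_mx K d f g : clear implicits.
Arguments mult_mx {K}.

(* Main.v *)
Require Import Defs.
From mathcomp Require Import all_boot all_order all_algebra.
Import GRing.Theory.
Local Open Scope ring_scope.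


Lemma colpoly_size (K : fieldType) d k (A : 'M[K]_(d,k)) j : (size (colpoly A j) <= d)%N.
Proof.
rewrite /colpoly; apply: (big_ind (fun p : {poly K} => (size p <= d)%N)).
- by rewrite size_poly0.
- move=> p q Hp Hq; apply: leq_trans (size_polyD _ _) _; by rewrite geq_max Hp Hq.
- move=> i _; apply: leq_trans (size_scale_leq _ _) _; by rewrite size_polyXn.
Qed.

Lemma colpoly_coef (K : fieldType) d k (A : 'M[K]_(d,k)) j (i : 'I_d) : (colpoly A j)`_i = A i j.
Proof.
rewrite /colpoly coef_sum (bigD1 i) //= coefZ coefXn eqxx mulr1 big1 ?addr0 //.
move=> l /negbTE Hl; rewrite coefZ coefXn.
have -> : (nat_of_ord i == nat_of_ord l) = false by rewrite eq_sym.
by rewrite mulr0.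
Qed.

Lemma colpoly_eq0 (K : fieldType) d k (A : 'M[K]_(d,k)) j : colpoly A j = 0 -> forall i, A i j = 0.
Proof. by move=> H i; rewrite -colpoly_coef H coef0. Qed.

Lemma poly_eq0_small (K : fieldType) d (p : {poly K}) : (size p <= d)%N ->
  (forall i : 'I_d, p`_i = 0) -> p = 0.
Proof.
move=> Hs H; apply/polyP => i; rewrite coef0.
case: (ltnP i d) => Hi; first exact: (H (Ordinal Hi)).
by apply: nth_default; apply: leq_trans Hs Hi.
Qed.

Lemma colpoly_of (K : fieldType) d (p : {poly K}) : (size p <= d)%N ->
  colpoly (\col_(i < d) p`_i) 0 = p.
Proof.
move=> Hs; apply/polyP => i.
case: (ltnP i d) => Hi.
  by rewrite (@colpoly_coef K d 1 _ 0 (Ordinal Hi)) mxE.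
rewrite (nth_default _ (leq_trans Hs Hi)).
by rewrite nth_default // (leq_trans (colpoly_size _ _ _ _ _) Hi).
Qed.

Lemma colpoly_mul (K : fieldType) d k (A : 'M[K]_(d,k)) (u : 'cV[K]_k) :
  colpoly (A *m u) 0 = \sum_j u j 0 *: colpoly A j.
Proof.
rewrite /colpoly.
under eq_bigr => i _ do rewrite mxE scaler_suml.
rewrite exchange_big /=; apply: eq_bigr => j _.
rewrite scaler_sumr; apply: eq_bigr => i _.
by rewrite scalerA mulrC.
Qed.

Lemma ker_col (K : fieldType) d k (f g : {poly K}) (A : 'M[K]_(d,k)) j : size f = d.+1 ->
  (forall i, (mult_mx d f g *m A) i j = 0) <-> (f %| g * colpoly A j).
Proof.
move=> Hf.
have Hc : forall i, (mult_mx d f g *m A) i j = ((g * colpoly A j) %% f)`_i.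
  move=> i; rewrite mxE /colpoly mulr_sumr.
  rewrite (big_morph (fun p => p %% f) (modpD f) (mod0p f)) coef_sum.
  apply: eq_bigr => l _; rewrite mxE -scalerAr modpZl coefZ mulrC //.
have Hf0 : f != 0 by rewrite -size_poly_eq0 Hf.
split.
  move=> H; apply/modp_eq0P; apply: (@poly_eq0_small K d).
    by rewrite -ltnS -Hf ltn_modp.
  by move=> i; rewrite -Hc.
by move=> H i; rewrite Hc (modp_eq0 H) coef0.
Qed.



Lemma sum_size (K : fieldType) k (P : 'I_k -> {poly K}) (c : 'I_k -> K) (j0 : 'I_k) :
  nat_of_ord j0 = 0%N ->
  (forall j1 j2 : 'I_k, (j1 < j2)%N -> (size (P j1) < size (P j2))%N) ->
  \sum_j c j *: P j != 0 -> (size (P j0) <= size (\sum_j c j *: P j)%R)%N.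
Proof.
move=> Hj0 Hinc Hnz.
pose Q (n : nat) : {poly K} := (\sum_(j < k | (j < n)%N) c j *: P j)%R.
have Inv : forall n, Q n = 0 \/ exists J : 'I_k, (J < n)%N /\ size (Q n) = size (P J).
  elim=> [|n IH].
    by left; rewrite /Q big_pred0 // => j.
  case: (ltnP n k) => Hnk.
    pose jn := Ordinal Hnk.
    have -> : Q n.+1 = c jn *: P jn + Q n.
      rewrite /Q (bigD1 jn) //=; congr (_ + _); apply: eq_bigl => j.
      rewrite ltnS -val_eqE /= leq_eqVlt; by case: ltngtP => //.
    have [->|Hc] := eqVneq (c jn) 0.
      rewrite scale0r add0r; case: IH => [->|[J [HJ HS]]]; first by left.
      by right; exists J; split => //; apply: ltnW.
    right; exists jn; split => //.
    case: IH => [->|[J [HJ HS]]]; first by rewrite addr0 size_scale.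
    by rewrite size_polyDl size_scale // HS; apply: Hinc.
  have -> : Q n.+1 = Q n.
    by apply: eq_bigl => j; rewrite (leq_trans (ltn_ord j) Hnk) (leq_trans (ltn_ord j) (leqW Hnk)).
  case: IH => [->|[J [HJ HS]]]; first by left.
  by right; exists J; split => //; apply: ltnW.
have HQ : Q k = \sum_j c j *: P j by apply: eq_bigl => j; rewrite ltn_ord.
case: (Inv k); rewrite HQ; first by move=> H; rewrite H eqxx in Hnz.
move=> [J [_ ->]].
have [<-|HJ] := eqVneq J j0; first by [].
apply: ltnW; apply: Hinc; rewrite Hj0 lt0n; apply: contra HJ => /eqP HJ.
by apply/eqP; apply: val_inj; rewrite /= HJ Hj0.
Qed.


Lemma f_prod (K : closedFieldType) (f : {poly K}) (rs : seq K) :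
  f \is monic -> squarefree f -> uniq rs -> (forall z, root f z = (z \in rs)) ->
  f = \prod_(z <- rs) ('X - z%:P).
Proof.
move=> Hm Hsq Hu Hr.
set P := \prod_(z <- rs) ('X - z%:P).
have HP : P %| f.
  apply: uniq_roots_dvdp; last by rewrite uniq_rootsE.
  by apply/allP => z; rewrite Hr.
have [q Hq] := dvdpP _ _ HP.
have Pm : P \is monic by apply: monic_prod_XsubC.
have Pnz : P != 0 by apply: monic_neq0.
have fnz : f != 0 by apply: monic_neq0.
have qnz : q != 0 by apply: contraNneq fnz => q0; rewrite Hq q0 mul0r.
have Hs1 : size q == 1%N.
  apply/negPn/negP => /closed_rootP [z Hz].
  have Hfz : root f z by rewrite Hq rootM Hz.
  have H1 : ('X - z%:P) * ('X - z%:P) %| f.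
    rewrite Hq; apply: dvdp_mul; first by rewrite dvdp_XsubCl.
    by rewrite dvdp_XsubCl /P root_prod_XsubC -Hr.
  by have := Hsq _ H1; rewrite size_XsubC.
have : P %= f.
  rewrite -dvdp_size_eqp // Hq size_mul // (eqP Hs1) add1n /=.
  by [].
by rewrite (eqp_monic Pm Hm) => /eqP ->.
Qed.

Theorem mainTheorem4 (K : closedFieldType) (f g : {poly K}) (d : nat)
  (rs : seq K) (k : nat) (Kg E : 'M[K]_(d, k)) :
  f \is monic -> g \is monic ->
  size f = d.+1 -> (1 <= d)%N ->
  squarefree f ->
  (* rs enumerates Z(f) without repetition *)
  uniq rs -> (forall z, root f z = (z \in rs)) ->
  (* ker M_g <> 0 *)
  (exists2 v : 'cV[K]_d, v != 0 & mult_mx d f g *m v = 0) ->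
  (* the columns of Kg form a basis of ker M_g *)
  mult_mx d f g *m Kg = 0 ->
  (forall v : 'cV[K]_d, mult_mx d f g *m v = 0 -> exists w : 'cV[K]_k, v = Kg *m w) ->
  (forall w : 'cV[K]_k, Kg *m w = 0 -> w = 0) ->
  col_echelon_form_of Kg E ->
  forall j0 : 'I_k, nat_of_ord j0 = 0%N ->
  exists2 c : K, c != 0 &
    colpoly E j0 = c *: \prod_(z <- rs | ~~ root g z) ('X - z%:P).
Proof.
move=> fm gm Hsf Hd Hsq Hu Hr [v vnz Hv] HKg Hspan Hinj [[U Uu HE] [Hnz Hinc]] j0 Hj0.
set s := \prod_(z <- rs | ~~ root g z) ('X - z%:P).
have Hf := @f_prod K f rs fm Hsq Hu Hr.
have Hdiv : forall h, f %| g * h -> s %| h.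
  move=> h Hh; rewrite /s -big_filter; apply: uniq_roots_dvdp; last by rewrite uniq_rootsE filter_uniq.
  apply/allP => z; rewrite mem_filter => /andP [Hg Hz].
  have : root (g*h) z by apply: (root_dvdp Hh); rewrite Hr.
  by rewrite rootM (negbTE Hg).
have Hsk : f %| g * s.
  rewrite {1}Hf; apply: uniq_roots_dvdp; last by rewrite uniq_rootsE.
  apply/allP => z Hz; rewrite rootM; case: (boolP (root g z)) => //= Hg.
  by rewrite /s -big_filter root_prod_XsubC mem_filter Hg.
have Hker : forall (w : 'cV[K]_d), mult_mx d f g *m w = 0 -> f %| g * colpoly w 0.
  move=> w Hw; apply/(@ker_col K d 1 f g w 0 Hsf) => i; by rewrite Hw mxE.
have snz : s != 0 by apply: monic_neq0; apply: monic_prod_XsubC.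
have Hsd : (size s <= d)%N.
  have Hvd := Hdiv _ (Hker v Hv).
  have pvnz : colpoly v 0 != 0.
    apply: contra vnz => /eqP H; apply/eqP/matrixP => i j; rewrite (ord1 j) [RHS]mxE.
    exact: (colpoly_eq0 _ _ _ _ _ H i).
  exact: leq_trans (dvdp_leq pvnz Hvd) (colpoly_size _ _ _ _ _).
pose vs := \col_(i < d) s`_i.
have Hvs : colpoly vs 0 = s := colpoly_of _ _ _ Hsd.
have Mvs : mult_mx d f g *m vs = 0.
  apply/matrixP => i j; rewrite (ord1 j) [RHS]mxE.
  by apply: (proj2 (@ker_col K d 1 f g vs 0 Hsf)); rewrite Hvs.
have [w Hw] := Hspan _ Mvs.
have Hs : s = \sum_j ((invmx U *m w) j 0) *: colpoly E j.
  by rewrite -Hvs Hw -{1}(mulmxK Uu Kg) -HE -mulmxA colpoly_mul.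
have Hp0 : s %| colpoly E j0.
  apply: Hdiv; apply/(@ker_col K d k f g E j0 Hsf) => i.
  by rewrite HE mulmxA HKg mul0mx mxE.
have Hle : (size (colpoly E j0) <= size s)%N.
  rewrite Hs; apply: (@sum_size K k (colpoly E)) => //; by rewrite -Hs.
have : s %= colpoly E j0.
  by rewrite -dvdp_size_eqp // eqn_leq Hle dvdp_leq.
case/eqpP => [[c1 c2]] /= /andP [c1nz c2nz] Heq.
exists (c1 / c2); first by rewrite mulf_neq0 // invr_neq0.
by rewrite mulrC -scalerA Heq scalerA mulVf // scale1r.
Qed.
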